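(* Let $N\ge2$ and $P\ge0$ be integers and let $\lambda$ be an element of a commutative ring. Then $\mathbb{HD}^P_{N+1}(\lambda)$ is the coefficient of the monomial $\prod_{i=0}^Nx_i^P$ in the polynomial \[ \Big(\lambda\sum_{i=0}^Nx_i^{N+1}-(N+1)\prod_{i=0}^Nx_i\Big)^{P}. \]
   Context: For natural numbers $P,M$ the Hasse--Dwork polynomial is \[ \mathbb{HD}^P_M(X)=(-M)^P\Big(1+M!\sum_{i=1}^{[P/M]}\binom{P}{M\times i}\Big(\frac{X}{-M}\Big)^{iM}\Big), \] where $M!\binom{P}{M\times i}=\binom{P}{i}\binom{P-i}{i}\binom{P-2i}{i}\cdots\binom{P-(M-1)i}{i}$; equivalently $\mathbb{HD}^P_M(X)=\sum_{i=0}^{[P/M]}M!\binom{P}{M\times i}(-M)^{P-iM}X^{iM}$, a polynomial with integer coefficients. *)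

(* Defs.v *)
From HB Require Import structures.
From mathcomp Require Import all_boot all_order all_algebra.
From mathcomp Require Export mpoly.
Set Implicit Arguments. Unset Strict Implicit. Unset Printing Implicit Defensive.
Import Order.TTheory GRing.Theory Num.Theory.
Local Open Scope ring_scope.

(* M! binom(P; M x i) = C(P,i) C(P-i,i) ... C(P-(M-1)i, i) *)
Definition multibinom (P M i : nat) : nat :=
  (\prod_(j < M) 'C(P - j * i, i))%N.

Definition HD (P M : nat) : {poly int} :=
  \sum_(i < (P %/ M).+1)
     ((multibinom P M i)%:Z * (- (M%:Z)) ^+ (P - i * M)) *: 'X^(i * M).

Definition HD_eval (R : comRingType) (P M : nat) (x : R) : R :=
  (map_poly intr (HD P M)).[x].

(* Main.v *)
Require Import Defs.
From HB Require Import structures.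
From mathcomp Require Import all_boot all_order all_algebra.
From mathcomp Require Import mpoly ring zify.
Import GRing.Theory.
Local Open Scope ring_scope.

Lemma binA (n a b : nat) : (a + b <= n)%N ->
  ('C(n, a) * 'C(n - a, b) = 'C(n, a + b) * 'C(a + b, a))%N.
Proof.
move=> h.
have ha : (a <= n)%N by lia.
have hb : (b <= n - a)%N by lia.
have h1 := bin_fact ha.
have h2 := bin_fact hb.
have h3 := bin_fact h.
have h4 := bin_fact (leq_addr b a).
rewrite addKn in h4. rewrite -subnDA in h2.
have K : (0 < a`! * b`! * (n - (a + b))`!)%N by rewrite !muln_gt0 !fact_gt0.
apply/eqP; rewrite -(eqn_pmul2r K); apply/eqP.
have -> : ('C(n, a) * 'C(n - a, b) * (a`! * b`! * (n - (a + b))`!))%N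
   = ('C(n, a) * (a`! * ('C(n - a, b) * (b`! * (n - (a + b))`!))))%N by ring.
rewrite h2 h1.
have -> : ('C(n, a+b) * 'C(a+b, a) * (a`! * b`! * (n - (a + b))`!))%N
   = ('C(n, a+b) * (('C(a+b, a) * (a`! * b`!)) * (n - (a + b))`!))%N by ring.
by rewrite h4 h3.
Qed.


Lemma mbE (P M i : nat) : (i * M <= P)%N ->
  multibinom P M i = ('C(P, i * M) * \prod_(j < M) 'C(i * M - j * i, i))%N.
Proof.
rewrite /multibinom.
elim: M P => [|M IH] P h; first by rewrite !big_ord0 muln0 bin0.
rewrite !big_ord_recl /= !mul0n !subn0.
have e : forall j : 'I_M, (P - (bump 0 j) * i = (P - i) - j * i)%N.
  by move=> j; rewrite /bump /= add1n mulSn subnDA.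
rewrite (eq_bigr _ (fun j _ => congr1 (fun x => 'C(x, i)) (e j))).
rewrite IH; last by rewrite mulnS in h; lia.
have e2 : forall j : 'I_M, (i * M.+1 - (bump 0 j) * i = i * M - j * i)%N.
  by move=> j; rewrite /bump /= add1n mulSn mulnS subnDA addKn.
rewrite (eq_bigr _ (fun j _ => congr1 (fun x => 'C(x, i)) (e2 j))).

rewrite mulnA binA; last by rewrite -mulnS.
by rewrite -mulnS !mulnA.
Qed.

Lemma L1 (R : comRingType) n (p : {mpoly R[n]}) u m :
  (p * 'X_[u])@_m = if (u <= m)%MM then p@_(m - u) else 0.
Proof.
case: ifP => h.
  by rewrite -{1}(submK h) addmC mcoeffMX.
apply/eqP; rewrite mcoeff_eq0; apply/negP.
rewrite (perm_mem (msuppMX p u)) => /mapP [m' _ em].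
by rewrite em lem_addr in h.
Qed.

Section Main.
Variables (R : comRingType) (n M : nat).
Hypothesis M_gt0 : (0 < M)%N.

Definition Ssum c : {mpoly R[n]} := \sum_(i < n | (i < c)%N) 'X_i ^+ M.
Definition em c b : 'X_{1..n} := [multinom (if (i < c)%N then b else 0%N) | i < n].

Lemma Xpow (i : 'I_n) k : (('X_i : {mpoly R[n]}) ^+ M) ^+ k = 'X_[U_(i) *+ M *+ k].
Proof. by rewrite !mpolyXn. Qed.

Lemma Zgen c (bad : pred 'X_{1..n}) : ~~ bad 0%MM ->
  (forall (i : 'I_n) m, (i < c)%N -> bad m -> (U_(i) *+ M <= m)%MM ->
      bad (m - U_(i) *+ M)%MM) ->
  forall k m, bad m -> (Ssum c ^+ k)@_m = 0.
Proof.
move=> b0 hb; elim=> [|k IH] m bm.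
  by rewrite expr0 mcoeff1; case: eqP bm => // ->; rewrite (negbTE b0).
rewrite exprSr /Ssum mulr_sumr raddf_sum /= big1 // => i ci.
rewrite -[_ ^+ M]expr1 Xpow mulm1n L1; case: ifP => // le.
exact: IH (hb _ _ ci bm le).
Qed.


Lemma Ssum0 : Ssum 0 = 0.
Proof. by rewrite /Ssum big1. Qed.

Lemma SsumS c (hc : (c < n)%N) :
  Ssum c.+1 = 'X_(Ordinal hc) ^+ M + Ssum c.
Proof.
rewrite /Ssum (bigD1 (Ordinal hc)) //=; congr (_ + _).
apply: eq_bigl => i; rewrite -val_eqE /=.
by rewrite ltnS [(i < c)%N]ltn_neqAle andbC.
Qed.

Lemma Qc c : (c <= n)%N -> forall k a,
  (Ssum c ^+ k)@_(em c (M * a)%N) =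
  if (k == c * a)%N then (\prod_(j < c) 'C(k - j * a, a))%N%:R else 0.
Proof.
elim: c => [|c IH] hc k a.
  rewrite Ssum0 mul0n.
  have -> : em 0 (M * a) = 0%MM by apply/mnmP => i; rewrite mnmE.
  case: k => [|k]; first by rewrite expr0 mcoeff1 eqxx big_ord0.
  by rewrite exprS mul0r mcoeff0.
have hc' : (c < n)%N by [].
set ic := Ordinal hc'.
have SS : Ssum c.+1 = 'X_ic ^+ M + Ssum c by exact: SsumS.
rewrite SS exprDn raddf_sum /=.
have hterm : forall j : 'I_k.+1,
  ((('X_ic ^+ M) ^+ (k - j) * Ssum c ^+ j) *+ 'C(k, j))@_(em c.+1 (M * a)%N)
  = if (j == (k - a)%N :> nat) && (a <= k)%N
    then (Ssum c ^+ j)@_(em c (M * a)%N) *+ 'C(k, j) else 0.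
  move=> j; have hj := ltn_ord j; rewrite ltnS in hj.
  rewrite mcoeffMn mulrC Xpow L1.
  case E: ((j == (k - a)%N :> nat) && (a <= k)%N).
    move/andP: E => [/eqP ej hak].
    have kj : (k - j = a)%N by lia.
    have le : (U_(ic) *+ M *+ (k - j) <= em c.+1 (M * a)%N)%MM.
      apply/mnm_lepP => i; rewrite !mulmnE mnm1E mnmE -val_eqE /= kj.
      by case: ifP => ?; case: eqP => ? /=; lia.
    have ee : (em c.+1 (M * a)%N - U_(ic) *+ M *+ (k - j))%MM = em c (M * a)%N.
      apply/mnmP => i; rewrite mnmBE !mulmnE mnm1E !mnmE -val_eqE /= kj.
      by do 2 (case: ifP => ?); case: eqP => ? /=; lia.
    by rewrite le ee.
  case: ifP => [le|]; last by rewrite mul0rn.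
  rewrite (@Zgen c (fun m => [exists i : 'I_n, (c <= i)%N && (0 < m i)%N]) _ _ j _ _) ?mul0rn //.
  - by apply/existsP => -[i /andP [_]]; rewrite mnm0E.
  - move=> i' m ci' /existsP [i0 /andP [ci0 pos]] _.
    apply/existsP; exists i0; rewrite ci0 /= mnmBE mulmnE mnm1E.
    have -> : (i' == i0) = false by apply/negbTE; rewrite -val_eqE /=; lia.
    by rewrite mul0n subn0.
  - apply/existsP; exists ic; rewrite /= leqnn /=.
    move/mnm_lepP: le => /(_ ic).
    rewrite mnmBE !mulmnE mnm1E !mnmE eqxx /= ltnSn mul1n => le.
    have le2 := le; rewrite leq_pmul2l // in le2.
    have hkj : (k - j < a)%N.
      move: E; case: (leqP a k) => hak E; last lia.
      rewrite andbT in E; move/negbT/eqP: E; lia.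
    have : (M * (k - j) < M * a)%N by rewrite ltn_pmul2l.
    lia.
rewrite (eq_bigr _ (fun j _ => hterm j)).
case: (leqP a k) => hak; last first.
  rewrite big1; last by move=> j _; rewrite andbF.
  by rewrite ifF //; apply/negbTE; rewrite mulSn; lia.
under eq_bigr do rewrite andbT.
rewrite -big_mkcond (big_ord1_eq _ (fun i : nat => (Ssum c ^+ i)@_(em c (M*a)%N) *+ 'C(k, i))) ifT; last lia.
rewrite IH; last exact: ltnW.
rewrite big_ord_recl mul0n subn0 bin_sub //.
have -> : (k - a == c * a)%N = (k == c.+1 * a)%N by apply/eqP/eqP; rewrite mulSn; lia.
case: ifP => _; last by rewrite mul0rn.
rewrite -[_ *+ 'C(k, a)]mulr_natr -natrM mulnC; congr (_ * _)%N%:R.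
apply: eq_bigr => j _; congr 'C(_, _).
by rewrite lift0 mulSn subnDA.
Qed.
End Main.

Lemma reidx (R : comRingType) M (g : nat -> R) P : (0 < M)%N ->
  \sum_(k < P.+1) (if (M %| k)%N then g (k %/ M)%N else 0) = \sum_(i < (P %/ M).+1) g i.
Proof.
move=> M0; elim: P => [|P IH].
  by rewrite div0n !big_ord1 /= dvdn0 div0n.
rewrite big_ord_recr /= IH (divnS _ M0).
case: ifP => h /=; first by rewrite h add1n [RHS]big_ord_recr.
by rewrite add0n addr0.
Qed.

Lemma hornerE_int (R : comRingType) (c : int) (k : nat) (x : R) :
  (map_poly intr (c *: 'X^k)).[x] = c%:~R * x ^+ k.
Proof. by rewrite map_polyZ map_polyXn hornerZ hornerXn. Qed.

Theorem lemma3p8 (R : comRingType) (N P : nat) (lambda : R) :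
  (2 <= N)%N ->
  HD_eval P N.+1 lambda =
  ((lambda *: \sum_(i < N.+1) ('X_i : {mpoly R[N.+1]}) ^+ N.+1
     - N.+1%:R *: \prod_(i < N.+1) ('X_i : {mpoly R[N.+1]})) ^+ P)
    @_[multinom P | i < N.+1].
Proof.
move=> _.
have M0 : (0 < N.+1)%N by [].
pose g (i : nat) : R := ('C(P, i * N.+1) * \prod_(j < N.+1) 'C(i * N.+1 - j * i, i))%N%:R
   * (- N.+1%:R) ^+ (P - i * N.+1) * lambda ^+ (i * N.+1).
rewrite /HD_eval /HD raddf_sum horner_sum.
rewrite (eq_bigr (fun i : 'I_(P %/ N.+1).+1 => g i)); last first.
  move=> i _; have hi := ltn_ord i; rewrite ltnS in hi.
  rewrite hornerE_int /g mbE; last first.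
    by rewrite -leq_divRL.
  congr (_ * _); by rewrite intrM rmorphXn.
rewrite -(reidx R N.+1 g P M0).
have SE : \sum_(i < N.+1) ('X_i : {mpoly R[N.+1]}) ^+ N.+1 = Ssum R N.+1 N.+1 N.+1.
  by rewrite /Ssum; apply: eq_bigl => i; rewrite ltn_ord.
have PE : forall e, (\prod_(i < N.+1) ('X_i : {mpoly R[N.+1]})) ^+ e
    = 'X_[[multinom e | i < N.+1]].
  by move=> e; rewrite -prodrXl mpolyXE_id; apply: eq_bigr => i _; rewrite mnmE.
rewrite SE addrC exprDn raddf_sum /=; apply: eq_bigr => k _.
have hk := ltn_ord k; rewrite ltnS in hk.
rewrite mcoeffMn -scaleNr !exprZn -scalerAl -scalerAr !mcoeffZ PE.
rewrite [X in (X)@__]mulrC L1.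
have le : ([multinom (P - k)%N | _ < N.+1] <= [multinom P | _ < N.+1])%MM.
  by apply/mnm_lepP => i; rewrite !mnmE leq_subr.
rewrite le.
have -> : ([multinom P | _ < N.+1] - [multinom (P - k)%N | _ < N.+1])%MM
    = em N.+1 N.+1 k.
  by apply/mnmP => i; rewrite mnmBE !mnmE ltn_ord; lia.
case: ifP => dk.
  set a := (k %/ N.+1)%N.
  have ka' : (a * N.+1 = k)%N by rewrite divnK.
  have ka : ((k : nat) = N.+1 * a)%N by rewrite mulnC ka'.
  have -> : em N.+1 N.+1 k = em N.+1 N.+1 (N.+1 * a)%N by rewrite -ka.
  rewrite (Qc R N.+1 N.+1 M0 N.+1 (leqnn _) k a) -ka eqxx /g ka'.
  by rewrite -[_ *+ 'C(P, k)]mulr_natr natrM; ring.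
rewrite (Zgen R N.+1 N.+1 N.+1 (fun m => [exists i : 'I_N.+1, ~~ (N.+1 %| m i)%N]) _ _ k _ _) ?mulr0 ?mul0rn //.
- by apply/existsP => -[i]; rewrite mnm0E dvdn0.
- move=> i' m _ /existsP [i0 h] hle; apply/existsP; exists i0.
  move/mnm_lepP: hle => /(_ i0); rewrite mnmBE !mulmnE mnm1E.
  case: eqP => e /=; last by rewrite mul0n subn0.
  by rewrite mul1n => hle; rewrite dvdn_subl.
- by apply/existsP; exists ord0; rewrite mnmE /= dk.
Qed.
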